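(* Let $p$ be a prime, let $\mathcal S$ be a compact Riemann surface of genus $g=p+1$, and let $G$ be a group acting faithfully by conformal automorphisms on $\mathcal S$ with $|G|=\rho p$ for an integer $\rho$. (a) If $\rho$ is coprime to $p$ and $\rho$ has no divisor $d\ne1$ with $d\equiv1\pmod p$ (in particular if $p>\rho$), then $G$ is a semidirect product $P\rtimes Q$ where $P\cong C_p$ (a normal Sylow $p$-subgroup) and $|Q|=\rho$. (b) If, in addition, $p$ is coprime to all the elliptic periods in the signature $\sigma$ of the action of $G$, then $Q$ has a faithful action, with signature $\sigma$, as a group of automorphisms of the Riemann surface $\mathcal T:=\mathcal S/P$, which has genus $2$.
   Context: If $G$ acts on $\mathcal S=\mathbb H/K$ ($K$ a Fuchsian surface group), then $G\cong\Gamma/K$ for a cocompact Fuchsian group $\Gamma$ containing $K$ as a normal subgroup; the signature of the action is the signature $(\gamma;m_1,\dots,m_k)$ of $\Gamma$ (genus of $\mathcal S/G$ and elliptic periods $m_i$). *)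

(* Defs.v *)
From HB Require Import structures.
From mathcomp Require Import all_boot all_order all_algebra all_fingroup all_solvable.
Set Implicit Arguments. Unset Strict Implicit. Unset Printing Implicit Defensive.
Import GRing.Theory Num.Theory.

(* Combinatorial (Riemann existence theorem) encoding of a conformal action
   of a finite group G on a compact Riemann surface of genus g >= 2 with
   signature (gam; m_1,...,m_k):  a surface-kernel epimorphism
   Gamma(gam; m_1..m_k) ->> G, i.e. a generating vector
   (a_1,b_1,...,a_gam,b_gam,c_1,...,c_k) of G with ord(c_j) = m_j and
   prod [a_i,b_i] * prod c_j = 1, together with the Riemann-Hurwitz formula
   2g - 2 = |G| (2 gam - 2 + sum (1 - 1/m_j)). *)

Section GenVector.
Variable gT : finGroupType.

Definition gen_vector (G : {set gT}) (gam : nat) (ms : seq nat)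
    (a b : 'I_gam -> gT) (c : 'I_(size ms) -> gT) : Prop :=
  [/\ all (fun m => 1 < m)%N ms,
      [/\ (forall i, a i \in G), (forall i, b i \in G) & (forall j, c j \in G)],
      (forall j : 'I_(size ms), #[c j]%g = nth 0%N ms j),
      << [set a i | i : 'I_gam] :|: [set b i | i : 'I_gam]
           :|: [set c j | j : 'I_(size ms)] >>%g = G
    & ((\prod_(i < gam) [~ a i, b i]) * (\prod_(j < size ms) c j))%g = 1%g].

Definition riemann_hurwitz (G : {set gT}) (g gam : nat) (ms : seq nat) : Prop :=
  ((2 * g%:R - 2 : rat) =
   #|G|%:R * (2 * gam%:R - 2 + \sum_(m <- ms) (1 - (m%:R)^-1)))%R.

End GenVector.

Arguments gen_vector {gT} G gam ms a b c.
Arguments riemann_hurwitz {gT} G g gam ms.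

(* Main.v *)
Require Import Defs.
From HB Require Import structures.
From mathcomp Require Import all_boot all_order all_algebra all_fingroup all_solvable.
From mathcomp Require Import ring.
Import GRing.Theory Num.Theory.

Theorem lemma4p1 (p rho : nat) (gT : finGroupType) (G : {group gT})
    (gam : nat) (ms : seq nat)
    (a b : 'I_gam -> gT) (c : 'I_(size ms) -> gT) :
  prime p ->
  gen_vector G gam ms a b c ->
  riemann_hurwitz G (p.+1) gam ms ->
  #|G| = (rho * p)%N ->
  coprime rho p ->
  (forall d : nat, d %| rho -> d %% p = 1 -> d = 1)%N ->
  exists P Q : {group gT},
    [/\ [/\ (p.-Sylow(G) P)%g, (P <| G)%g, cyclic P & #|P| = p],
        (P ><| Q = G)%g, #|Q| = rho
      & (all (fun m => coprime p m) ms ->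
         gen_vector (G / P)%g gam ms
           (fun i => coset P (a i)) (fun i => coset P (b i))
           (fun j => coset P (c j))
         /\ riemann_hurwitz (G / P)%g 2 gam ms)].
Proof.
move=> pr_p gv rh oG co_rp hd.
have p_gt0 := prime_gt0 pr_p.
have rho_gt0 : (0 < rho)%N.
  by case: rho oG {co_rp hd} => // oG; have := cardG_gt0 G; rewrite oG.
have nsyl1 : #|'Syl_p(G)%g| = 1%N.
  have hm := card_Syl_mod G pr_p.
  apply: hd => //.
  have := card_Syl_dvd p G; rewrite oG Gauss_dvdl //.
  by rewrite coprime_sym -coprime_modr hm coprimen1.
have [P sylP nsPG] : exists2 P : {group gT}, (p.-Sylow(G) P)%g & (P <| G)%g.
  by apply/normal_sylowP; rewrite nsyl1.
have oP : #|P| = p.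
  rewrite (card_Hall sylP) oG p_part lognM // (logn_coprime (p:=p) (m:=rho)); last by rewrite coprime_sym.
  by rewrite add0n logn_prime // eqxx expn1.
have [Q] : exists Q : {group gT}, Q \in ([complements to P in G])%g; last rewrite complgC => /(sdprod_normal_complP nsPG) defG.
  apply/splitsP; apply: SchurZassenhaus_split nsPG.
  exact: pHall_Hall sylP.
have oQ : #|Q| = rho.
  have := sdprod_card defG; rewrite oP oG => /eqP.
  by rewrite mulnC eqn_pmul2r // => /eqP.
exists P, Q; split => //.
  by split => //; apply: prime_cyclic; rewrite oP.
move=> /allP cop.
have nPG := normal_norm nsPG.
have GN : forall x, x \in G -> x \in 'N(P)%g by move=> x /(subsetP nPG).
case: gv => [ms1 [aG bG cG] ordc genG rel].
have oGP : #|(G / P)%g| = rho.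
  rewrite card_quotient // -(divgS (normal_sub nsPG)) oG oP mulnK //.
have imq : forall (I : finType) (f : I -> gT), (forall i, f i \in G) ->
    ([set f i | i : I] / P)%g = [set coset P (f i) | i : I].
  move=> I f hf; rewrite /quotient morphimEsub -?imset_comp //.
  by apply/subsetP => _ /imsetP[i _ ->]; apply: GN.
split.
  split => //.
  - by split => i; apply: mem_quotient.
  - move=> j; rewrite -ordc /order -quotient_cycle ?GN //.
    rewrite card_quotient ?cycle_subG ?GN // -indexgI coprime_TIg ?indexg1 //.
    rewrite -/(order (c j)) ordc oP coprime_sym; apply: cop.
    exact: mem_nth.
  - rewrite -genG quotient_gen; last first.
      by apply: (subset_trans _ nPG); rewrite -genG subset_gen.
    by rewrite !quotientU !imq.
  - transitivity (coset P ((\prod_(i < gam) [~ a i, b i]) * (\prod_(j < size ms) c j))%g);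
      last by rewrite rel morph1.
    have abN : forall i, ([~ a i, b i] \in 'N(P))%g by move=> i; rewrite GN // groupR.
    have cN : forall j, c j \in 'N(P)%g by move=> j; rewrite GN.
    rewrite morphM; last 2 first.
    - by apply: group_prod => i _; apply: abN.
    - by apply: group_prod => j _; apply: cN.
    rewrite !morph_prod; last 2 first.
    - by move=> k _; first [apply: abN | apply: cN].
    - by move=> k _; first [apply: abN | apply: cN].
    congr (_ * _)%g; apply: eq_bigr => i _.
    by rewrite morphR // GN.
move: rh; rewrite /riemann_hurwitz oGP oG.
set X := (\sum_(m <- ms) _)%R => rh.
have pn0 : (p%:R != 0 :> rat)%R by rewrite pnatr_eq0 -lt0n.
apply: (mulfI pn0).
have -> : (p%:R * (rho%:R * (2 * gam%:R - 2 + X)) = (rho * p)%:R * (2 * gam%:R - 2 + X) :> rat)%R by rewrite natrM; ring.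
rewrite -rh.
rewrite -addn1 natrD; ring.
Qed.
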